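(* Let $I$ be a countable set with $|I|\ge2$, let $\mathfrak{M}_i=(S_i,\mathcal{L}_i)$, $i\in I$, be partial linear spaces, $\mathfrak{M}=\bigotimes_{i\in I}\mathfrak{M}_i$ with point set $S=\prod_{i\in I}S_i$, and let $\mathcal{H}_i$ be a hyperplane of $\mathfrak{M}_i$ for each $i\in I$. Then the set $$\mathcal{H}=\bigcup_{i\in I}\{x\in S: x_i\in\mathcal{H}_i\}$$ is a degenerate and non-spiky hyperplane of $\mathfrak{M}$.
   Context: A partial linear space is a pair $(S,\mathcal{L})$ of points and lines such that every line has at least two points, every point lies on a line, two distinct lines share at most one point; points are collinear if on a common line. A subspace is a set such that any line meeting it in at least two points lies in it; a hyperplane is a proper subspace meeting every line; a set $X$ is spiky if every point of $X$ is collinear with some point outside $X$. Segre product: for $a\in S$, $x\in S_i$, $a[i/x]$ is $a$ with $i$-th coordinate replaced by $x$, $a[i/A]=\{a[i/x]:x\in A\}$; lines are $a[i/l]$, $a\in S$, $i\in I$, $l\in\mathcal{L}_i$. For a hyperplane $\mathcal{H}$, $\mathcal{H}^{[a]}_i=\{x\in S_i:a[i/x]\in\mathcal{H}\}$; $\mathcal{H}$ is non-degenerate if all $\mathcal{H}^{[a]}_i$ ($a\in S$, $i\in I$) are hyperplanes of $\mathfrak{M}_i$, and degenerate otherwise. *)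

(* Defs.v *)
From mathcomp Require Import all_boot.
Set Implicit Arguments. Unset Strict Implicit. Unset Printing Implicit Defensive.

Definition collinear (P : Type) (L : (P -> Prop) -> Prop) (x y : P) : Prop :=
  exists l, L l /\ l x /\ l y.

Definition partial_linear_space (P : Type) (L : (P -> Prop) -> Prop) : Prop :=
  (forall l, L l -> exists x y, x <> y /\ l x /\ l y) /\
  (forall x, exists l, L l /\ l x) /\
  (forall l m, L l -> L m -> l <> m ->
     forall x y, l x -> l y -> m x -> m y -> x = y).

Definition subspace (P : Type) (L : (P -> Prop) -> Prop) (X : P -> Prop) : Prop :=
  forall l, L l -> (exists x y, x <> y /\ l x /\ l y /\ X x /\ X y) ->
    forall z, l z -> X z.

Definition hyperplane (P : Type) (L : (P -> Prop) -> Prop) (X : P -> Prop) : Prop :=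
  subspace L X /\ (exists p, ~ X p) /\ (forall l, L l -> exists p, l p /\ X p).

Definition spiky (P : Type) (L : (P -> Prop) -> Prop) (X : P -> Prop) : Prop :=
  forall x, X x -> exists y, ~ X y /\ collinear L x y.

(* a[i/x] : replace the i-th coordinate of a by x *)
Definition upd (I : eqType) (S : I -> Type) (a : forall i, S i) (i : I) (x : S i)
  : forall j, S j :=
  fun j => match @eqP I i j with
           | ReflectT e => eq_rect i S x j e
           | ReflectF _ => a j
           end.

Definition segre_lines (I : eqType) (S : I -> Type)
  (L : forall i, (S i -> Prop) -> Prop) : ((forall i, S i) -> Prop) -> Prop :=
  fun m => exists (a : forall i, S i) (i : I) (l : S i -> Prop),
    L i l /\ m = (fun p => exists x, l x /\ p = @upd I S a i x).

Definition slice (I : eqType) (S : I -> Type) (H : (forall i, S i) -> Prop)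
  (a : forall i, S i) (i : I) : S i -> Prop :=
  fun x => H (@upd I S a i x).

Definition nondegenerate (I : eqType) (S : I -> Type)
  (L : forall i, (S i -> Prop) -> Prop) (H : (forall i, S i) -> Prop) : Prop :=
  forall (a : forall i, S i) (i : I), hyperplane (L i) (@slice I S H a i).

Definition degenerate (I : eqType) (S : I -> Type)
  (L : forall i, (S i -> Prop) -> Prop) (H : (forall i, S i) -> Prop) : Prop :=
  ~ nondegenerate L H.

(* Main.v *)
Require Import Defs.
From mathcomp Require Import all_boot.
From Stdlib Require Import ClassicalEpsilon.

Lemma upd_same {I : eqType} {S : I -> Type} (a : forall i, S i) i x :
  @upd I S a i x i = x.
Proof.
rewrite /upd; case: (@eqP I i i) => [e|n]; last by case: n.
by rewrite (eq_irrelevance e erefl).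
Qed.

Lemma upd_other {I : eqType} {S : I -> Type} (a : forall i, S i) i x j :
  i <> j -> @upd I S a i x j = a j.
Proof. by rewrite /upd; case: (@eqP I i j). Qed.

Theorem proposition3p8 (I : countType) (S : I -> Type)
  (L : forall i, (S i -> Prop) -> Prop)
  (Hs : forall i, S i -> Prop)
  (hI : exists i j : I, i <> j)
  (hPLS : forall i, partial_linear_space (L i))
  (hH : forall i, hyperplane (L i) (Hs i)) :
  let H := fun x : (forall i, S i) => exists i, Hs i (x i) in
  hyperplane (segre_lines L) H /\ degenerate L H /\ ~ spiky (segre_lines L) H.
Proof.
move=> H.
have ch : forall i, {p : S i | ~ Hs i p}.
  move=> i; apply: constructive_indefinite_description.
  by case: (hH i) => _ [[p hp] _]; exists p.
pose f := fun i => proj1_sig (ch i).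
have hf : forall i, ~ Hs i (f i) by move=> i; exact: (proj2_sig (ch i)).
have hne : forall i, exists h, Hs i h.
  move=> i; case: (hPLS i) => _ [hl _]; case: (hl (f i)) => l [Ll _].
  by case: (hH i) => _ [_ hm]; case: (hm l Ll) => h [_ hh]; exists h.
have fH : ~ H f by case=> i; apply: hf.
split; [split; [|split]|split].
- move=> m [a [i [l [Ll ->]]]] [p [q [pq [[x [lx Ep]] [[y [ly Eq]] [Hx Hy]]]]]].
  subst p q.
  move=> z [u [lu ->]].
  case: Hx => j Hj; case: (eqVneq i j) => [eij|nij]; last first.
    move: Hj; rewrite upd_other; last exact/eqP.
    by move=> Hj; exists j; rewrite upd_other //; exact/eqP.
  subst j; rewrite upd_same in Hj.
  case: Hy => k Hk; case: (eqVneq i k) => [eik|nik]; last first.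
    move: Hk; rewrite upd_other; last exact/eqP.
    by move=> Hk; exists k; rewrite upd_other //; exact/eqP.
  subst k; rewrite upd_same in Hk.
  exists i; rewrite upd_same.
  case: (hH i) => [hs _]; apply: (hs l Ll) => //.
  exists x, y; split=> //; move=> exy; apply: pq; by subst y.
- by exists f.
- move=> m [a [i [l [Ll ->]]]].
  case: (hH i) => _ [_ hm]; case: (hm l Ll) => h [lh Hh].
  exists (@upd I S a i h); split; first by exists h.
  by exists i; rewrite upd_same.
- case: hI => i [j nij]; case: (hne j) => h Hh.
  move=> nd; case: (nd (@upd I S f j h) i) => _ [[p np] _]; apply: np.
  by exists j; rewrite upd_other ?upd_same // => e; apply: nij.
- case: hI => i [j nij]; case: (hne i) => hi Hi; case: (hne j) => hj Hj.
  pose x := @upd I S (@upd I S f i hi) j hj.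
  have xi : x i = hi by rewrite /x upd_other ?upd_same // => e; apply: nij.
  have xj : x j = hj by rewrite /x upd_same.
  move=> sp; case: (sp x); first by exists i; rewrite xi.
  move=> y [nHy [m [[a [k [l [Ll Em]]]] [mx my]]]].
  subst m; case: mx => u [_ Ex]; case: my => v [_ Ey]; apply: nHy.
  case: (eqVneq k i) => [eki|nki].
    subst k; exists j; rewrite Ey upd_other //.
    by rewrite -(@upd_other I S a i u j nij) -Ex xj.
  exists i; rewrite Ey upd_other; last exact/eqP.
  by rewrite -(@upd_other I S a k u i ltac:(exact/eqP)) -Ex xi.
Qed.
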